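(* For every integer $n\ge 1$, the strong product $P_3\boxtimes R_n$ is $1$-perfectly orientable.
   Context: All graphs are finite and simple. An orientation of a graph $G$ is $1$-perfect if the out-neighborhood of every vertex induces a clique in $G$; $G$ is $1$-perfectly orientable if it admits a $1$-perfect orientation. The strong product $G\boxtimes H$ has vertex set $V(G)\times V(H)$, with distinct $(u,v),(u',v')$ adjacent iff $u'\in N_G[u]$ and $v'\in N_H[v]$ (closed neighborhoods). $P_3$ is the path on $3$ vertices. For an integer $n\ge 0$, the raft $R_n$ is the graph with vertex set $X\cup Y$, where $X=\{x_0,\dots,x_n\}$ and $Y=\{y_0,\dots,y_n\}$ are disjoint cliques, and, for $0\le i,j\le n$, $x_i$ is adjacent to $y_j$ iff $i+j\ge n+1$ (no other edges). *)

(* Defs.v *)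
(* A simple graph = finType T with symmetric irreflexive e : rel T. *)
From mathcomp Require Import all_boot.
Set Implicit Arguments. Unset Strict Implicit. Unset Printing Implicit Defensive.

Definition cnbr (T : eqType) (e : rel T) (x y : T) : bool := (x == y) || e x y.

Definition strong_prod (T1 T2 : eqType) (e1 : rel T1) (e2 : rel T2) : rel (T1 * T2) :=
  fun p q => [&& p != q, cnbr e1 p.1 q.1 & cnbr e2 p.2 q.2].

Definition P3_adj : rel 'I_3 :=
  fun i j => (i.+1 == j :> nat) || (j.+1 == i :> nat).

(* The raft R_n: vertex (false, i) is x_i, vertex (true, j) is y_j, 0 <= i,j <= n.
   X and Y are cliques; x_i ~ y_j iff i + j >= n + 1. *)
Definition raft_adj (n : nat) : rel (bool * 'I_n.+1) :=
  fun p q => (p != q) &&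
    (if p.1 == q.1 then true else (n.+1 <= p.2 + q.2)).

Definition is_orientation (T : finType) (e o : rel T) : Prop :=
  (forall x y, o x y -> e x y) /\
  (forall x y, e x y -> o x y || o y x) /\
  (forall x y, ~~ (o x y && o y x)).

Definition one_perfect (T : finType) (e o : rel T) : Prop :=
  forall x y z, o x y -> o x z -> y != z -> e y z.

Definition one_perfectly_orientable (T : finType) (e : rel T) : Prop :=
  exists o : rel T, is_orientation e o /\ one_perfect e o.
Arguments raft_adj n : clear implicits.

(* Main.v *)
Require Import Defs.
From mathcomp Require Import all_boot.
From mathcomp Require Import zify.

Definition V n := ('I_3 * (bool * 'I_n.+1))%type.

Definition neqn (a : nat) (s : bool) (i b : nat) (t : bool) (j : nat) : bool :=
  ~~ [&& a == b, s == t & i == j].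

Definition spn n (a : nat) (s : bool) (i b : nat) (t : bool) (j : nat) : bool :=
  [&& neqn a s i b t j, [|| a == b, a.+1 == b | b.+1 == a] &
      (s == t) || (n.+1 <= i + j)].

Definition Lay (s : bool) : nat := if s then 2 else 0.

Definition orin (a : nat) (s : bool) (i b : nat) (t : bool) (j : nat) : bool :=
  if s == t then
    [|| (a == b) && (i < j),
        [&& a == 1, b != 1, i < j & b == Lay s] |
        [&& b == 1, a != 1 & (i <= j) || (a != Lay s)]]
  else if s then (a == 2) || (b == 2) else (a != 2) && (b != 2).

Lemma neq_eq n (p q : V n) :
  (p != q) = neqn p.1 p.2.1 p.2.2 q.1 q.2.1 q.2.2.
Proof.
case: p => a [s i]; case: q => b [t j] /=.
by rewrite /neqn !xpair_eqE.
Qed.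

Lemma sp_eq n (p q : V n) :
  strong_prod P3_adj (raft_adj n) p q = spn n p.1 p.2.1 p.2.2 q.1 q.2.1 q.2.2.
Proof.
rewrite /strong_prod neq_eq /spn.
case: p => a [s i]; case: q => b [t j] /=.
rewrite /cnbr /P3_adj /raft_adj /= xpair_eqE.
case: (s =P t) => [->|_]; rewrite ?eqxx /=.
  by case: (i =P j) => [->|_]; rewrite ?eqxx ?orbT ?andbT.
by case: (i =P j) => [->|_]; rewrite ?eqxx ?andbF ?andbT ?orbT /= ?andbT.
Qed.

Definition ori n : rel (V n) := fun p q =>
  strong_prod P3_adj (raft_adj n) p q && orin p.1 p.2.1 p.2.2 q.1 q.2.1 q.2.2.

Theorem proposition19 (n : nat) (hn : 1 <= n) :
  one_perfectly_orientable (strong_prod P3_adj (raft_adj n)).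
Proof.
exists (ori n); split; [split; [|split]|].
- by move=> x y /andP[].
- move=> [[a Ha] [s [i Hi]]] [[b Hb] [t [j Hj]]].
  rewrite /ori !sp_eq /=.
  case: s; case: t; rewrite /spn /neqn /orin /Lay /=; lia.
- move=> [[a Ha] [s [i Hi]]] [[b Hb] [t [j Hj]]].
  rewrite /ori !sp_eq /=.
  case: s; case: t; rewrite /spn /neqn /orin /Lay /=; lia.
- move=> [[a Ha] [s [i Hi]]] [[b Hb] [t [j Hj]]] [[c Hc] [u [k Hk]]].
  rewrite /ori !sp_eq neq_eq /=.
  case: s; case: t; case: u; rewrite /spn /neqn /orin /Lay /=; lia.
Qed.
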